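(* Let $R$ be a commutative ring, $\mathrm{S}_{11}(R)$ as below, $\mathrm{B}_3(R)$ the upper triangular $3\times3$ matrices, and $M'=\mathrm{B}_3(R)/\mathrm{S}_{11}(R)$, a free $R$-module of rank $1$ generated by the class $\overline{E}_{11}$ of $E_{11}$. Then $H^0(\mathrm{S}_{11}(R),M')\cong R$ and $H^n(\mathrm{S}_{11}(R),M')=0$ for all $n>0$.
   Context: $\mathrm{S}_{11}(R)=\left\{\begin{pmatrix}a&b&c\\0&e&d\\0&0&a\end{pmatrix}\mid a,b,c,d,e\in R\right\}\subseteq\mathrm{M}_3(R)$. $M'$ is an $\mathrm{S}_{11}(R)$-bimodule via matrix multiplication (a matrix acts on $\overline{E}_{11}$ on either side by its $(1,1)$-entry). $H^n$ is Hochschild cohomology. *)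

(* Defs.v *)
From HB Require Import structures.
From mathcomp Require Import all_boot all_order all_algebra.
Set Implicit Arguments. Unset Strict Implicit. Unset Printing Implicit Defensive.
Import GRing.Theory.
Local Open Scope ring_scope.

Section S11.
Variable R : comRingType.

Notation i0 := (@inord 2 0).
Notation i1 := (@inord 2 1).
Notation i2 := (@inord 2 2).

Definition is_S11 (A : 'M[R]_3) : bool :=
  [&& A i1 i0 == 0, A i2 i0 == 0, A i2 i1 == 0 & A i0 i0 == A i2 i2].

(* M' = B_3(R)/S_11(R) is free of rank 1 on the class of E_11; we identify
   r * Ebar_11 with r : R.  Both actions are by the (1,1)-entry. *)
Definition lact (A : 'M[R]_3) (m : R) : R := A i0 i0 * m.
Definition ract (m : R) (A : 'M[R]_3) : R := m * A i0 i0.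

(* Hochschild n-cochains: maps from n-tuples of elements of S_11(R) to M';
   represented as functions on n-tuples of 3x3 matrices, of which only the
   values on S_11-tuples matter. *)
Definition cochain_fun (n : nat) := ('I_n -> 'M[R]_3) -> R.

Definition inS11n n (x : 'I_n -> 'M[R]_3) := forall j, is_S11 (x j).

Definition upd n (x : 'I_n -> 'M[R]_3) (i : 'I_n) (v : 'M[R]_3) :=
  fun j => if j == i then v else x j.

Definition is_cochain n (f : cochain_fun n) : Prop :=
  forall (x : 'I_n -> 'M[R]_3) (i : 'I_n) (a b : 'M[R]_3) (r s : R),
    inS11n x -> is_S11 a -> is_S11 b ->
    f (upd x i (r *: a + s *: b)) = r * f (upd x i a) + s * f (upd x i b).

Definition hdiff n (f : cochain_fun n) : cochain_fun n.+1 :=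
  fun x =>
    let xx := fun k : nat => x (inord k) in
    lact (xx 0%N) (f (fun j : 'I_n => xx j.+1))
    + \sum_(i < n) (-1) ^+ i.+1 *
        f (fun j : 'I_n =>
             if (j < i)%N then xx j
             else if (j == i :> nat) then xx i *m xx i.+1
             else xx j.+1)
    + (-1) ^+ n.+1 * ract (f (fun j : 'I_n => xx j)) (xx n).

Definition is_cocycle n (f : cochain_fun n) : Prop :=
  is_cochain f /\ forall x, inS11n x -> hdiff f x = 0.

Definition ceq n (f g : cochain_fun n) : Prop :=
  forall x, inS11n x -> f x = g x.

Definition is_coboundary n : cochain_fun n -> Prop :=
  match n with
  | 0%N => fun f => ceq f (fun _ => 0)
  | n'.+1 => fun f => exists g : cochain_fun n', is_cochain g /\ ceq f (hdiff g)
  end.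

Definition HH_vanishes n : Prop :=
  forall f : cochain_fun n, is_cocycle f -> is_coboundary f.

(* H^n(S_11(R), M') is isomorphic to R as an R-module: an R-linear map
   phi : R -> Z^n inducing a bijection R -> Z^n / B^n. *)
Definition HH_iso_R n : Prop :=
  exists phi : R -> cochain_fun n,
    (forall r, is_cocycle (phi r)) /\
    (forall r s t x, phi (r * s + t) x = r * phi s x + phi t x) /\
    (forall r, is_coboundary (phi r) -> r = 0) /\
    (forall f, is_cocycle f -> exists r,
        is_coboundary (fun x => f x - phi r x)).

End S11.

(* Main.v *)
Require Import Defs.
From mathcomp Require Import all_boot all_order all_algebra.
From mathcomp Require Import ring zify.
From Stdlib Require Import FunctionalExtensionality.
Set Implicit Arguments. Unset Strict Implicit. Unset Printing Implicit Defensive.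
Import GRing.Theory.
Local Open Scope ring_scope.

Section P.
Variable R : comRingType.
Local Notation M := 'M[R]_3.
Local Notation i0 := (@inord 2 0).
Local Notation i1 := (@inord 2 1).
Local Notation i2 := (@inord 2 2).

Definition chi (A : M) : R := A i0 i0.
Definition mrg (i : nat) (y : nat -> M) : nat -> M :=
  fun k => if (k < i)%N then y k else if k == i then y i *m y i.+1 else y k.+1.
Definition Hd n (F : (nat -> M) -> R) (y : nat -> M) : R :=
  chi (y 0%N) * F (fun k => y k.+1) + \sum_(i < n) (-1) ^+ i.+1 * F (mrg i y)
  + (-1) ^+ n.+1 * (F y * chi (y n)).
Definition fnat n (f : cochain_fun R n) : (nat -> M) -> R :=
  fun y => f (fun j : 'I_n => y j).
Definition locn n (F : (nat -> M) -> R) :=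
  forall y y', (forall k, (k < n)%N -> y k = y' k) -> F y = F y'.
Definition ccons (s : M) (y : nat -> M) : nat -> M :=
  fun k => if k is k'.+1 then y k' else s.
Definition setk (i : nat) (v : M) (y : nat -> M) : nat -> M :=
  fun k => if k == i then v else y k.

Lemma hdiff_Hd n (f : cochain_fun R n) x :
  hdiff f x = Hd n (fnat f) (fun k => x (inord k)).
Proof. by []. Qed.

Lemma fnat_loc n (f : cochain_fun R n) : locn n (fnat f).
Proof.
move=> y y' H; rewrite /fnat; congr f.
by apply: functional_extensionality => j; apply: H.
Qed.

Lemma Hd_loc n F y y' : locn n F -> (forall k, (k <= n)%N -> y k = y' k) ->
  Hd n F y = Hd n F y'.
Proof.
move=> hF H; rewrite /Hd.
rewrite (H 0%N) // (H n) // (hF y y') //; last by move=> k hk; apply: H; lia.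
rewrite (hF (fun k => y k.+1) (fun k => y' k.+1)) //; last by move=> k hk; apply: H.
congr (_ + _ + _); apply: eq_bigr => i _; congr (_ * _); apply: hF => k hk.
have hi := ltn_ord i.
rewrite /mrg; case: ifP => _; first by apply: H; lia.
case: ifP => _; first by rewrite !H //; lia.
by apply: H; lia.
Qed.

Lemma mrg_cons i s y : mrg i.+1 (ccons s y) = ccons s (mrg i y).
Proof.
by apply: functional_extensionality => -[|k] //; rewrite /mrg /= ltnS eqSS.
Qed.

Lemma mrg0 s y : mrg 0 (ccons s y) = ccons (s *m y 0%N) (fun k => y k.+1).
Proof. by apply: functional_extensionality => -[|k]. Qed.

Lemma lemA n F s z :
  Hd n.+1 F (ccons s z) + Hd n (fun y => F (ccons s y)) z =
  chi s * F z - F (ccons (s *m z 0%N) (fun k => z k.+1))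
  + chi (z 0%N) * F (ccons s (fun k => z k.+1)).
Proof.
rewrite /Hd big_ord_recl /= mrg0.
have -> : \sum_(i < n) (-1) ^+ (lift ord0 i).+1 * F (mrg (lift ord0 i) (ccons s z))
   = - \sum_(i < n) (-1) ^+ i.+1 * F (ccons s (mrg i z)).
  rewrite -sumrN; apply: eq_bigr => i _.
  by rewrite lift0 mrg_cons exprS mulN1r mulNr.
rewrite !exprS; ring.
Qed.

Lemma lemC m F (phi : M -> M) X :
  Hd m.+1 (fun y => F (ccons (phi (y 0%N)) (fun k => y k.+1))) X =
  Hd m.+1 F (ccons (phi (X 0%N)) (fun k => X k.+1))
  + chi (X 0%N) * F (ccons (phi (X 1%N)) (fun k => X k.+2))
  - F (ccons (phi (X 0%N *m X 1%N)) (fun k => X k.+2))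
  - chi (phi (X 0%N)) * F (fun k => X k.+1)
  + F (ccons (phi (X 0%N) *m X 1%N) (fun k => X k.+2)).
Proof.
rewrite /Hd !big_ord_recl.
rewrite (eq_bigr (fun i : 'I_m => (-1)^+ i.+2 *
   F (ccons (phi (X 0%N)) (mrg i (fun k => X k.+1))))); last first.
  move=> i _; rewrite lift0; congr (_ * F _).
have -> : \sum_(i < m) (-1)^+ (lift ord0 i).+1 *
   F (mrg (lift ord0 i) (ccons (phi (X 0%N)) (fun k => X k.+1))) =
   \sum_(i < m) (-1)^+ i.+2 * F (ccons (phi (X 0%N)) (mrg i (fun k => X k.+1))).
  by apply: eq_bigr => i _; rewrite lift0 mrg_cons.
rewrite mrg0.
have -> : mrg 0 X 0 = X 0%N *m X 1%N by [].
have -> : (fun k => mrg 0 X k.+1) = (fun k => X k.+2) by [].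
rewrite /= expr1.
set S := \sum_(i < m) _. set e := (-1) ^+ m.+2.
ring.
Qed.

Lemma v0 : (i0 : nat) = 0%N. Proof. by rewrite inordK. Qed.
Lemma v1 : (i1 : nat) = 1%N. Proof. by rewrite inordK. Qed.
Lemma v2 : (i2 : nat) = 2%N. Proof. by rewrite inordK. Qed.

Lemma ord3 (i : 'I_3) : i = i0 \/ i = i1 \/ i = i2.
Proof.
case: i => -[|[|[|k]]] Hk.
- by left; apply: val_inj; rewrite /= v0.
- by right; left; apply: val_inj; rewrite /= v1.
- by right; right; apply: val_inj; rewrite /= v2.
- by [].
Qed.

Lemma mulE3 (A B : M) i j :
  (A *m B) i j = A i i0 * B i0 j + A i i1 * B i1 j + A i i2 * B i2 j.
Proof.
rewrite mxE !big_ord_recr big_ord0 /= add0r.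
have e0 : (widen_ord (leqnSn 2) (widen_ord (leqnSn 1) ord_max)) = i0
  by apply: val_inj; rewrite /= v0.
have e1 : (widen_ord (leqnSn 2) ord_max) = i1 by apply: val_inj; rewrite /= v1.
have e2 : (@ord_max 2) = i2 by apply: val_inj; rewrite /= v2.
by rewrite e0 e1 e2.
Qed.

Definition e1 : M := \matrix_(i, j)
  (((i == 0%N :> nat) && (j == 0%N :> nat)) || ((i == 2%N :> nat) && (j == 2%N :> nat)))%:R.
Definition E12 : M := \matrix_(i, j) ((i == 0%N :> nat) && (j == 1%N :> nat))%:R.
Definition E22 : M := \matrix_(i, j) ((i == 1%N :> nat) && (j == 1%N :> nat))%:R.
Definition E23 : M := \matrix_(i, j) ((i == 1%N :> nat) && (j == 2%N :> nat))%:R.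
Definition tau (x : M) : M := x i0 i1 *: E22 + x i0 i2 *: E23.
Definition delta (x : M) : M := e1 *m x - chi x *: e1.

Lemma S11P (A : M) : is_S11 A ->
  [/\ A i1 i0 = 0, A i2 i0 = 0, A i2 i1 = 0 & A i2 i2 = A i0 i0].
Proof. by case/and4P => /eqP -> /eqP -> /eqP -> /eqP ->. Qed.

Ltac ent := rewrite ?(mulE3, mxE) ?v0 ?v1 ?v2 /= ?mulr1n ?mulr0n.

Lemma S11_intro (A : M) : A i1 i0 = 0 -> A i2 i0 = 0 -> A i2 i1 = 0 ->
  A i0 i0 = A i2 i2 -> is_S11 A.
Proof. by move=> h1 h2 h3 h4; apply/and4P; rewrite h1 h2 h3 h4. Qed.

Lemma S11_mul (A B : M) : is_S11 A -> is_S11 B -> is_S11 (A *m B).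
Proof.
move=> /S11P [a1 a2 a3 a4] /S11P [b1 b2 b3 b4].
apply: S11_intro; ent; rewrite ?a1 ?a2 ?a3 ?a4 ?b1 ?b2 ?b3 ?b4; ring.
Qed.

Lemma S11_lin (A B : M) r s : is_S11 A -> is_S11 B -> is_S11 (r *: A + s *: B).
Proof.
move=> /S11P [a1 a2 a3 a4] /S11P [b1 b2 b3 b4].
apply: S11_intro; ent; rewrite ?a1 ?a2 ?a3 ?a4 ?b1 ?b2 ?b3 ?b4; ring.
Qed.

Lemma S11_e1 : is_S11 e1. Proof. by apply: S11_intro; ent. Qed.
Lemma S11_E12 : is_S11 E12. Proof. by apply: S11_intro; ent. Qed.
Lemma S11_tau x : is_S11 (tau x).
Proof. apply: S11_intro; ent; ring. Qed.
Lemma S11_delta x : is_S11 x -> is_S11 (delta x).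
Proof.
move=> hx; have -> : delta x = 1 *: (e1 *m x) + (- chi x) *: e1.
  by rewrite /delta scale1r scaleNr.
by apply: S11_lin; [apply: S11_mul => //; apply: S11_e1 | apply: S11_e1].
Qed.

Lemma chi_e1 : chi e1 = 1. Proof. by rewrite /chi; ent. Qed.
Lemma chi_E12 : chi E12 = 0. Proof. by rewrite /chi; ent. Qed.
Lemma chi_tau x : chi (tau x) = 0. Proof. rewrite /chi /tau; ent; ring. Qed.

Lemma mx3 (A B : M) :
  A i0 i0 = B i0 i0 -> A i0 i1 = B i0 i1 -> A i0 i2 = B i0 i2 ->
  A i1 i0 = B i1 i0 -> A i1 i1 = B i1 i1 -> A i1 i2 = B i1 i2 ->
  A i2 i0 = B i2 i0 -> A i2 i1 = B i2 i1 -> A i2 i2 = B i2 i2 -> A = B.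
Proof.
move=> h00 h01 h02 h10 h11 h12 h20 h21 h22.
apply/matrixP => i j; case: (ord3 i) => [->|[->|->]];
  case: (ord3 j) => [->|[->|->]] //.
Qed.
Ltac mxeq := apply: mx3; ent.

Lemma E12_tau x : is_S11 x -> E12 *m tau x = delta x.
Proof.
move=> /S11P [a1 a2 a3 a4]; rewrite /tau /delta /chi.
mxeq; rewrite ?a1 ?a2 ?a3 ?a4; ring.
Qed.

Lemma tau_mul x y : is_S11 x -> is_S11 y ->
  tau x *m y = 1 *: tau (x *m y) + (- chi x) *: tau y.
Proof.
move=> /S11P [a1 a2 a3 a4] /S11P [b1 b2 b3 b4]; rewrite /tau /chi.
mxeq; rewrite ?a1 ?a2 ?a3 ?a4 ?b1 ?b2 ?b3 ?b4; ring.
Qed.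

Lemma tau_lin r s a b : tau (r *: a + s *: b) = r *: tau a + s *: tau b.
Proof. rewrite /tau; mxeq; ring. Qed.

Lemma e1_mul x : e1 *m x = chi x *: e1 + 1 *: delta x.
Proof. by rewrite /delta scale1r addrC subrK. Qed.

Lemma fn_lin n (f : cochain_fun R n) : is_cochain f ->
  forall (y : nat -> M) i a b r s, (i < n)%N -> (forall k, is_S11 (y k)) ->
  is_S11 a -> is_S11 b ->
  fnat f (setk i (r *: a + s *: b) y) =
  r * fnat f (setk i a y) + s * fnat f (setk i b y).
Proof.
move=> hf y i a b r s hi hy ha hb.
have := hf (fun j : 'I_n => y j) (Ordinal hi) a b r s (fun j => hy j) ha hb.
have E : forall v, fnat f (setk i v y) = f (upd (fun j : 'I_n => y j) (Ordinal hi) v).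
  move=> v; rewrite /fnat; congr f.
by rewrite !E.
Qed.

Lemma cocyc n (f : cochain_fun R n) Y : is_cocycle f ->
  (forall k, is_S11 (Y k)) -> Hd n (fnat f) Y = 0.
Proof.
move=> [_ hf] hY; have := hf (fun j : 'I_n.+1 => Y j) (fun j => hY j).
rewrite hdiff_Hd => <-; apply: Hd_loc; first exact: fnat_loc.
by move=> k hk /=; rewrite inordK.
Qed.

Lemma setk0 v s y : setk 0 v (ccons s y) = ccons v y.
Proof. by apply: functional_extensionality => -[|k]. Qed.
Lemma setkS i v s y : setk i.+1 v (ccons s y) = ccons s (setk i v y).
Proof. by apply: functional_extensionality => -[|k] //; rewrite /setk /= eqSS. Qed.

Lemma S11_ccons s y : is_S11 s -> (forall k, is_S11 (y k)) ->
  forall k, is_S11 (ccons s y k).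
Proof. by move=> hs hy [|k]; [exact: hs | exact: hy]. Qed.

Lemma keyA n (f : cochain_fun R n.+1) X : is_cocycle f ->
  (forall k, is_S11 (X k)) ->
  Hd n (fun y => fnat f (ccons e1 y)) X =
  fnat f X - fnat f (ccons (delta (X 0%N)) (fun k => X k.+1)).
Proof.
move=> hf hX; have hA := @lemA n (fnat f) e1 X.
rewrite cocyc // in hA; last by apply: S11_ccons => //; apply: S11_e1.
rewrite add0r in hA; rewrite hA chi_e1 mul1r.
have L := @fn_lin _ _ hf.1 (ccons e1 (fun k => X k.+1)) 0%N e1
  (delta (X 0%N)) (chi (X 0%N)) 1 (erefl _).
rewrite !setk0 -e1_mul in L; rewrite L; [ring | | apply: S11_e1 | ].
- by apply: S11_ccons => //; apply: S11_e1.
- exact: S11_delta.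
Qed.

Lemma keyB n (f : cochain_fun R n.+1) X : is_cocycle f ->
  (forall k, is_S11 (X k)) ->
  Hd n (fun y => fnat f (ccons E12 y)) (ccons (tau (X 0%N)) (fun k => X k.+1)) =
  - fnat f (ccons (delta (X 0%N)) (fun k => X k.+1)).
Proof.
move=> hf hX; have hA := @lemA n (fnat f) E12 (ccons (tau (X 0%N)) (fun k => X k.+1)).
rewrite cocyc // in hA; last first.
  apply: S11_ccons; first exact: S11_E12.
  by apply: S11_ccons => //; apply: S11_tau.
rewrite /= chi_E12 chi_tau E12_tau // in hA.
rewrite add0r in hA; rewrite hA; ring.
Qed.

Lemma fnat_X n (f : cochain_fun R n.+1) x : fnat f (fun k => x (inord k)) = f x.
Proof.
rewrite /fnat; congr f; apply: functional_extensionality => j.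
by rewrite inord_val.
Qed.

Lemma Hd_sub n F1 F2 y :
  Hd n (fun z => F1 z - F2 z) y = Hd n F1 y - Hd n F2 y.
Proof.
rewrite /Hd.
have -> : \sum_(i < n) (-1) ^+ i.+1 * (F1 (mrg i y) - F2 (mrg i y)) =
  \sum_(i < n) (-1) ^+ i.+1 * F1 (mrg i y) - \sum_(i < n) (-1) ^+ i.+1 * F2 (mrg i y).
  by rewrite -sumrB; apply: eq_bigr => i _; rewrite mulrBr.
set S1 := \sum_(i < n) _. set S2 := \sum_(i < n) _. set e := (-1) ^+ n.+1.
ring.
Qed.

Lemma H1_zero (f : cochain_fun R 1) x : is_cocycle f -> inS11n x -> f x = 0.
Proof.
move=> hf hx; set X := fun k => x (inord k).
have hX : forall k, is_S11 (X k) by move=> k; apply: hx.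
have hA := keyA hf hX; have hB := keyB hf hX.
have Z : forall s Y, Hd 0 (fun y => fnat f (ccons s y)) Y = 0.
  move=> s Y; rewrite /Hd big_ord0.
  have -> : fnat f (ccons s (fun k => Y k.+1)) = fnat f (ccons s Y).
    by apply: fnat_loc => -[|k].
  rewrite expr1; ring.
rewrite Z in hA; rewrite Z in hB.
rewrite -fnat_X -/X.
have : fnat f X = fnat f (ccons (delta (X 0%N)) (fun k => X k.+1)).
  by apply/eqP; rewrite -subr_eq0 -hA.
move=> ->; apply/eqP; rewrite -oppr_eq0 -hB //.
Qed.

Definition Gf (F : (nat -> M) -> R) (Y : nat -> M) : R :=
  F (ccons e1 Y) - F (ccons E12 (ccons (tau (Y 0%N)) (fun k => Y k.+1))).

Lemma G_loc m (f : cochain_fun R m.+2) : locn m.+1 (Gf (fnat f)).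
Proof.
move=> y y' H; rewrite /Gf; congr (_ - _); apply: fnat_loc.
- by move=> [|k] hk //=; apply: H.
- by move=> [|[|k]] hk //=; [rewrite H | apply: H].
Qed.

Lemma setk1 v a b y : setk 1 v (ccons a (ccons b y)) = ccons a (ccons v y).
Proof. by apply: functional_extensionality => -[|[|k]]. Qed.

Lemma G_lin m (f : cochain_fun R m.+2) (Y : nat -> M) i a b r s :
  is_cochain f -> (i < m.+1)%N -> (forall k, is_S11 (Y k)) ->
  is_S11 a -> is_S11 b ->
  Gf (fnat f) (setk i (r *: a + s *: b) Y) =
  r * Gf (fnat f) (setk i a Y) + s * Gf (fnat f) (setk i b Y).
Proof.
move=> hf hi hY ha hb.
have hb0 : forall k, is_S11 (ccons e1 Y k) by apply: S11_ccons => //; apply: S11_e1.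
have hbase : forall w, is_S11 w ->
  forall k, is_S11 (ccons E12 (ccons w (fun k => Y k.+1)) k).
  move=> w hw; apply: S11_ccons; first exact: S11_E12.
  by apply: S11_ccons => // k; apply: hY.
have T2 : forall v, fnat f (ccons E12 (ccons (tau (setk i v Y 0%N))
      (fun k => setk i v Y k.+1))) =
    if i is i'.+1 then fnat f (setk i'.+2 v (ccons E12 (ccons (tau (Y 0%N)) (fun k => Y k.+1))))
    else fnat f (setk 1 (tau v) (ccons E12 (ccons (tau (Y 0%N)) (fun k => Y k.+1)))).
  move=> v; case: i hi => [|i'] hi.
    rewrite setk1; congr (fnat f (ccons _ (ccons _ _))).
  rewrite !setkS; congr (fnat f (ccons _ (ccons _ _))).
have T1 : forall v, fnat f (ccons e1 (setk i v Y)) = fnat f (setk i.+1 v (ccons e1 Y))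
  by move=> v; rewrite setkS.
rewrite /Gf !T1 !T2 (@fn_lin _ _ hf (ccons e1 Y) i.+1) //.
case: i hi {T1 T2} => [|i'] hi.
  rewrite tau_lin (@fn_lin _ _ hf _ 1%N) //; [ring | | exact: S11_tau | exact: S11_tau].
  exact: hbase (S11_tau _).
rewrite (@fn_lin _ _ hf _ i'.+2) //; first ring.
exact: hbase (S11_tau _).
Qed.

Lemma main_gen m (f : cochain_fun R m.+2) : is_cocycle f -> is_coboundary f.
Proof.
move=> hf; pose F := fnat f.
pose g : cochain_fun R m.+1 := fun x => Gf F (fun k => x (inord k)).
exists g; split.
  move=> x i a b r s hx ha hb.
  have E : forall v, g (upd x i v) = Gf F (setk i v (fun k => x (inord k))).
    move=> v; rewrite /g; apply: G_loc => k hk.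
    by rewrite /upd /setk -val_eqE /= inordK.
  rewrite !E; apply: G_lin => //; exact: hf.1.
move=> x hx; rewrite hdiff_Hd.
have -> : fnat g = Gf F.
  apply: functional_extensionality => Y; rewrite /fnat /g.
  by apply: G_loc => k hk /=; rewrite inordK.
set X := fun k => x (inord k).
have hX : forall k, is_S11 (X k) by move=> k; apply: hx.
rewrite /Gf Hd_sub (keyA hf hX).
have HC := lemC m (fun y => F (ccons E12 y)) tau X.
rewrite /= in HC. rewrite HC (keyB hf hX) tau_mul // /F.
have E := @fn_lin _ _ hf.1 (ccons E12 (ccons (tau (X 1%N)) (fun k => X k.+2))) 1%N
  (tau (X 0%N *m X 1%N)) (tau (X 1%N)) 1 (- chi (X 0%N)) (erefl _).
rewrite !setk1 in E; rewrite E; [ | | exact: S11_tau | exact: S11_tau]; last first.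
  apply: S11_ccons; first exact: S11_E12.
  by apply: S11_ccons; [exact: S11_tau | move=> k; apply: hX].
rewrite chi_tau -fnat_X -/X.
ring.
Qed.
End P.

Theorem lemma5p7 (R : comRingType) :
  HH_iso_R R 0 /\ (forall n : nat, (0 < n)%N -> HH_vanishes R n).
Proof.
split.
  exists (fun r (_ : 'I_0 -> 'M[R]_3) => r); split; [|split; [|split]].
  - move=> r; split; first by move=> x [].
    move=> x _; rewrite /hdiff big_ord0 /lact /ract expr1 addr0; ring.
  - by [].
  - by move=> r H; apply: (H (fun _ => 0)) => -[].
  - move=> f _; exists (f (fun _ => 0)) => x _.
    have -> : x = (fun _ => 0) by apply: functional_extensionality => -[].
    by rewrite subrr.
case=> [//|[|m]] _ f hf.
  exists (fun _ => 0); split; first by move=> x [].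
  move=> x hx; rewrite (H1_zero hf hx) /hdiff big_ord0 /lact /ract mulr0 mul0r mulr0.
  by rewrite !addr0.
exact: main_gen.
Qed.
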